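(* Let $(X,\beta,m)$ be a non-atomic standard probability space, $\tau$ an ergodic invertible measure-preserving map of $X$, and $(\epsilon_n)_{n\ge1}$ a sequence decreasing to $0$ with $0<\epsilon_n\le1$ for all $n$. Then there is a decreasing sequence $(B_n)_{n\ge1}$ of measurable sets with $\lim_n m(B_n)=0$ and $m(B_n)\ge\epsilon_n$ for all $n$, which is an a.e. invisible measure-theoretic shrinking target for $\tau$: for a.e. $x\in X$, $\tau^n(x)\in B_n$ for only finitely many $n$.
   Context: A measure-theoretic shrinking target is a decreasing sequence of measurable sets $(B_n)$ with $m(B_n)\to0$. *)

(* Defs.v *)
From HB Require Import structures.
From mathcomp Require Import all_boot all_order all_algebra.
From mathcomp Require Import all_classical all_reals all_analysis.
Set Implicit Arguments. Unset Strict Implicit. Unset Printing Implicit Defensive.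
Import Order.TTheory GRing.Theory Num.Theory.
Local Open Scope classical_set_scope.
Local Open Scope ring_scope.

(* Standard Borel space: Borel-isomorphic to a Borel subset of R
   (equivalent, by Kuratowski, to being Borel-isomorphic to a Borel subset
   of a Polish space). *)
Definition standard_borel {d : measure_display} (X : measurableType d)
  (R : realType) : Prop :=
  exists f : X -> R,
    [/\ injective f, measurable_fun setT f, measurable (f @` setT) &
        forall A : set X, measurable A -> measurable (f @` A)].

Definition non_atomic {d : measure_display} (X : measurableType d)
  (R : realType) (m : set X -> \bar R) : Prop :=
  forall A : set X, measurable A -> (0 < m A)%E ->
    exists2 B : set X, measurable B /\ B `<=` A & (0 < m B)%E /\ (m B < m A)%E.

Definition invertible_mp {d : measure_display} (X : measurableType d)
  (R : realType) (m : set X -> \bar R) (tau : X -> X) : Prop :=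
  exists sigma : X -> X,
    [/\ cancel tau sigma, cancel sigma tau,
        measurable_fun setT tau, measurable_fun setT sigma &
        forall A : set X, measurable A -> m (tau @^-1` A) = m A].

Definition ergodic {d : measure_display} (X : measurableType d)
  (R : realType) (m : set X -> \bar R) (tau : X -> X) : Prop :=
  forall A : set X, measurable A -> tau @^-1` A = A ->
    m A = 0%E \/ m A = 1%E.

(* Main.v *)
Require Import Defs.
From HB Require Import structures.
From mathcomp Require Import all_boot all_order all_algebra.
From mathcomp Require Import all_classical all_reals all_analysis.
Import Order.TTheory GRing.Theory Num.Theory.
Local Open Scope classical_set_scope.
Local Open Scope ring_scope.
From mathcomp Require Import lra zify.
Section Dyn.
Context (d : measure_display) (X : measurableType d) (R : realType)
  (m : probability X R) (tau sigma : X -> X).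
Hypotheses (ts : cancel tau sigma) (st : cancel sigma tau)
  (mtau : measurable_fun setT tau) (msig : measurable_fun setT sigma)
  (mp : forall A : set X, measurable A -> m (tau @^-1` A) = m A)
  (erg : ergodic m tau) (na : non_atomic m).

Lemma mpre (f : X -> X) (mf : measurable_fun setT f) (B : set X) :
  measurable B -> measurable (f @^-1` B).
Proof. by move=> mB; rewrite -(setTI (f @^-1` B)); apply: mf. Qed.

Lemma miter (f : X -> X) (mf : measurable_fun setT f) n :
  measurable_fun setT (iter n f).
Proof.
elim: n => [|n IH]; first exact: measurable_id.
rewrite (_ : iter n.+1 f = f \o iter n f); last by apply/funext => x; rewrite iterS.
exact: measurableT_comp.
Qed.

Lemma msig_pres (A : set X) : measurable A -> m (sigma @^-1` A) = m A.
Proof.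
move=> mA; rewrite -mp; last exact: mpre.
congr (m _); apply/seteqP; split => x /=; by rewrite ts.
Qed.

Lemma iter_pres (f : X -> X) (mf : measurable_fun setT f)
  (hf : forall A, measurable A -> m (f @^-1` A) = m A) n A :
  measurable A -> m (iter n f @^-1` A) = m A.
Proof.
elim: n A => [|n IH] A mA; first by [].
rewrite (_ : iter n.+1 f @^-1` A = iter n f @^-1` (f @^-1` A)).
  by rewrite IH ?hf //; exact: mpre.
by apply/seteqP; split => x.
Qed.

Lemma iter_cancel n x : iter n sigma (iter n tau x) = x.
Proof. by elim: n => // n IH; rewrite [iter n.+1 tau x]iterS iterSr ts. Qed.

Lemma mpreS n A : measurable A -> measurable (iter n sigma @^-1` A).
Proof. by apply: mpre; apply: miter. Qed.
Lemma mpreT n A : measurable A -> measurable (iter n tau @^-1` A).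
Proof. by apply: mpre; apply: miter. Qed.

Definition Wset (F : set X) := \bigcup_a (iter a sigma @^-1` F).

Lemma mW F : measurable F -> measurable (Wset F).
Proof. by move=> mF; apply: bigcupT_measurable => a; exact: mpreS. Qed.

Lemma W_full F : measurable F -> (0 < m F)%E -> m (Wset F) = 1%E.
Proof.
move=> mF F0.
pose G b := iter b tau @^-1` Wset F.
pose V := \bigcup_b G b.
have mG b : measurable (G b) by apply: mpreT; exact: mW.
have mV : measurable V by exact: bigcupT_measurable.
have inv : tau @^-1` V = V.
  apply/seteqP; split => x /=.
    by case=> b _ [a _ h]; exists b.+1 => //; exists a => //=; rewrite -[tau (iter b tau x)]iterS iterSr.
  case=> b _ [a _ h]; exists b => //; exists a.+1 => //=.
  by rewrite -[sigma (iter a sigma _)]iterS iterSr -[iter b tau (tau x)]iterSr iterS ts.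
have FV : F `<=` V by move=> x Fx; exists 0%N => //; exists 0%N.
have V1 : m V = 1%E.
  case: (erg V mV inv) => // V0.
  have := le_measure _ (mem_set mF) (mem_set mV) FV.
  move=> h; have : (0 < m V)%E := lt_le_trans F0 (h _ m).
  by rewrite V0 ltxx.
have Gnd : nondecreasing_seq G.
  move=> b b' bb'; apply/subsetPset => x [a _ h]; exists (a + (b' - b))%N => //.
  move: (b' - b)%N (subnK bb') => k <-.
  by rewrite /= iterD iterD iter_cancel.
have h := nondecreasing_cvg_mu mG mV Gnd; have := h _ m; clear h.
rewrite (_ : m \o G = fun=> m (Wset F)); last first.
  by apply/funext => b /=; rewrite iter_pres //; exact: mW.
rewrite -V1 /V; move/cvg_lim => <- //; by rewrite lim_cst.
Qed.

Lemma lem {A B : set X} : measurable A -> measurable B -> A `<=` B -> (m A <= m B)%E.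
Proof. by move=> mA mB AB; exact: (le_measure m (mem_set mA) (mem_set mB) AB). Qed.

Lemma mfin {A : set X} : measurable A -> m A = (fine (m A))%:E.
Proof. by move=> mA; rewrite fineK // fin_num_measure. Qed.

Definition Sset (F : set X) j :=
  (iter j sigma @^-1` F) `\` \bigcup_(i in `I_j) (iter i sigma @^-1` F).

Lemma mS F j : measurable F -> measurable (Sset F j).
Proof.
move=> mF; apply: measurableD; first exact: mpreS.
by apply: bigcup_measurable => i _; exact: mpreS.
Qed.

Lemma mSle F j : measurable F -> (m (Sset F j) <= m F)%E.
Proof.
move=> mF; rewrite -(@iter_pres sigma msig msig_pres j F mF).
by apply: lem; [exact: mS|exact: mpreS|move=> x []].
Qed.

Lemma Ubig_le F L : measurable F ->
  (m (\bigcup_(j in `I_L) Sset F j) <= (L%:R * fine (m F))%:E)%E.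
Proof.
move=> mF; elim: L => [|L IH].
  rewrite (_ : \bigcup_(j in `I_0) _ = set0) ?measure0 ?mul0r //.
  by apply/seteqP; split => x // [j].
have -> : \bigcup_(j in `I_L.+1) Sset F j =
    (\bigcup_(j in `I_L) Sset F j) `|` Sset F L.
  apply/seteqP; split => x.
    case=> j /= jL Sj; move: jL; rewrite ltnS leq_eqVlt => /orP [/eqP <-|jL].
      by right.
    by left; exists j.
  case=> [[j /= jL Sj]|SL]; first by exists j => //=; rewrite ltnS ltnW.
  by exists L => //=.
apply: le_trans (measureU2 m _ _) _.
- by apply: bigcup_measurable => j _; exact: mS.
- exact: mS.
apply: le_trans (leeD IH (mSle F L mF)) _.
by rewrite (mfin mF) -EFinD lee_fin -natr1 mulrDl mul1r.
Qed.

Lemma small_set k : exists F, measurable F /\ (0 < m F)%E /\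
  (k.+1%:R%:E * m F <= 1)%E.
Proof.
elim: k => [|k [F [mF [F0 Fk]]]].
  by exists setT; rewrite probability_setT mul1e; split => //; split.
have [B [mB BF] [B0 BF']] := na F mF F0.
have mC : measurable (F `\` B) by exact: measurableD.
have eC : m (F `\` B) = (fine (m F) - fine (m B))%:E.
  rewrite measureD //; first by rewrite (setIidr BF) EFinB -(mfin mF) -(mfin mB).
  by rewrite ltey_eq fin_num_measure.
move: F0 Fk B0 BF'; rewrite (mfin mF) (mfin mB) !lte_fin -EFinM lee_fin.
set f := fine (m F); set b := fine (m B) => F0 Fk B0 BF'.
have K0 : 0 <= k%:R :> R by [].
have [Bk|Bk] := lerP (k.+2%:R * b) 1.
  by exists B; split => //; rewrite (mfin mB) lte_fin -EFinM lee_fin.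
exists (F `\` B); split => //; rewrite eC lte_fin -EFinM lee_fin; split.
  by rewrite subr_gt0.
have e1 : k.+1%:R = k%:R + 1 :> R by rewrite -natr1.
have e2 : k.+2%:R = k%:R + 2 :> R by rewrite -addn2 natrD.
move: Fk Bk; rewrite e1 e2 => h1 h2.
have := mulr_ge0 K0 (ltW F0); have := mulr_ge0 K0 (ltW B0).
rewrite -/f -/b; lra.
Qed.

Lemma small_set2 (L : nat) (δ : R) : 0 < δ ->
  exists F, [/\ measurable F, 0 < fine (m F) & L.+1%:R * fine (m F) <= δ].
Proof.
move=> d0.
set c := L.+1%:R / δ.
have hc := truncnS_gt c.
have [F [mF [F0 Fk]]] := small_set (Num.Def.trunc c).
exists F; split => //.
  by move: F0; rewrite (mfin mF) lte_fin.
move: Fk; rewrite (mfin mF) -EFinM lee_fin.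
set K := (Num.Def.trunc c).+1%:R; set f := fine (m F) => Fk.
have f0 : 0 < f by move: F0; rewrite (mfin mF) lte_fin.
have eL : L.+1%:R = c * δ by rewrite /c divfK // gt_eqF.
rewrite eL.
have df : 0 < δ * f by exact: mulr_gt0.
have : (K - c) * (δ * f) >= 0 by apply: mulr_ge0; [lra|exact: ltW].
have : δ * (1 - K * f) >= 0 by apply: mulr_ge0; lra.
rewrite /=; lra.
Qed.

Lemma nat1 (n L j : nat) : (n < L)%N -> (L <= j)%N -> j = ((j - n) + n)%N.
Proof. lia. Qed.
Lemma nat2 (i j n : nat) : (i < j - n)%N -> (i + n < j)%N.
Proof. lia. Qed.
Lemma nat3 (j n L M : nat) : (j < L + M)%N -> (j - n < L + M)%N.
Proof. lia. Qed.

Definition Tset F L M := \bigcup_(j in [set j | (L <= j < L + M)%N]) Sset F j.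

Lemma core (L : nat) (δ : R) : 0 < δ -> δ <= 4^-1 ->
  exists D, [/\ measurable D, (δ%:E <= m D)%E, (m D <= (2 * δ)%:E)%E &
     (m (\bigcup_(n in `I_L) (iter n tau @^-1` D)) <= (3 * δ)%:E)%E].
Proof.
move=> d0 d4.
have [F [mF f0 fL]] := small_set2 L δ d0.
set f := fine (m F) in f0 fL.
have Lf0 : 0 <= L%:R * f by apply: mulr_ge0 => //; exact: ltW.
have Lf : L%:R * f <= δ.
  by move: fL; rewrite -natr1 mulrDl mul1r; have := ltW f0; lra.
have fd : f <= δ by move: fL; rewrite -natr1 mulrDl mul1r; lra.
have mT M : measurable (Tset F L M) by apply: bigcup_measurable => j _; exact: mS.
pose Tinf := \bigcup_(j in [set j | (L <= j)%N]) Sset F j.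
have mTinf : measurable Tinf by apply: bigcup_measurable => j _; exact: mS.
have mU : measurable (\bigcup_(j in `I_L) Sset F j).
  by apply: bigcup_measurable => j _; exact: mS.
have WU : Wset F `<=` (\bigcup_(j in `I_L) Sset F j) `|` Tinf.
  move=> x [a _ Fa].
  have exP : exists a, `[< F (iter a sigma x) >] by exists a; exact/asboolP.
  case: (ex_minnP exP) => a0 /asboolP Fa0 mina.
  have Sa0 : Sset F a0 x.
    split => // -[i /= ia0 Fi].
    by have := mina i (asboolT Fi); rewrite leqNgt ia0.
  by case: (ltnP a0 L) => h; [left; exists a0 | right; exists a0].
have Tbig : (1 <= (L%:R * f)%:E + m Tinf)%E.
  rewrite -(W_full F mF); last by rewrite (mfin mF) lte_fin.
  apply: le_trans (lem (mW F mF) (measurableU _ _ mU mTinf) WU) _.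
  apply: le_trans (measureU2 m mU mTinf) _.
  exact: leeD (Ubig_le F L mF) (lexx _).
have Tinf_gt : (δ%:E < m Tinf)%E.
  by rewrite (mfin mTinf) lte_fin; move: Tbig; rewrite (mfin mTinf) -EFinD lee_fin; lra.
have TU : \bigcup_M Tset F L M = Tinf.
  apply/seteqP; split => x.
    by case=> M _ [j /= /andP[Lj _] Sj]; exists j.
  case=> j /= Lj Sj; exists j.+1 => //; exists j => //=.
  by rewrite Lj /= addnS ltnS leq_addl.
have Tnd : nondecreasing_seq (Tset F L).
  move=> M M' MM'; apply/subsetPset => x [j /= /andP[Lj jM] Sj].
  by exists j => //=; rewrite Lj /= (leq_trans jM) // leq_add2l.
have exM : exists M, (δ%:E <= m (Tset F L M))%E.
  apply: contrapT => /forallNP hn.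
  have hc := nondecreasing_cvg_mu (mu:=m) mT (bigcupT_measurable _ mT) Tnd.
  rewrite TU in hc.
  have : (m Tinf <= δ%:E)%E.
    rewrite -(cvg_lim _ hc) //; apply: lime_le; first by apply/cvg_ex; exists (m Tinf).
    apply: nearW => M /=; have := hn M; move/negP; rewrite -ltNge; exact: ltW.
  by rewrite leNgt Tinf_gt.
case: (ex_minnP exM) => M0; case: M0 => [|M'] hM0 minM.
  have e : Tset F L 0 = set0.
    by apply/seteqP; split => x // [j /= /andP[Lj]]; rewrite addn0 ltnNge Lj.
  by move: hM0; rewrite e measure0 lee_fin; lra.
have hM' : (m (Tset F L M') < δ%:E)%E.
  by rewrite ltNge; apply/negP => h; have := minM _ h; rewrite ltnn.
have DU : (m (Tset F L M'.+1) <= (2 * δ)%:E)%E.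
  have sub : Tset F L M'.+1 `<=` Tset F L M' `|` Sset F (L + M').
    move=> x [j /= /andP[Lj jM] Sj]; move: jM; rewrite addnS ltnS leq_eqVlt.
    case/orP => [/eqP ej|jM]; first by right; rewrite -ej.
    by left; exists j => //=; rewrite Lj.
  apply: le_trans (lem (mT _) (measurableU _ _ (mT M') (mS _ _ mF)) sub) _.
  apply: le_trans (measureU2 m (mT M') (mS _ _ mF)) _.
  apply: le_trans (leeD (ltW hM') (mSle F (L + M') mF)) _.
  by rewrite (mfin mF) -EFinD lee_fin -/f; lra.
exists (Tset F L M'.+1); split => //.
have mG : measurable (\bigcup_(n in `I_L) (iter n tau @^-1` Tset F L M'.+1)).
  by apply: bigcup_measurable => n _; exact: mpreT.
have sub : \bigcup_(n in `I_L) (iter n tau @^-1` Tset F L M'.+1) `<=`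
    (\bigcup_(j in `I_L) Sset F j) `|` Tset F L M'.+1.
  move=> x [n /= nL [j /= /andP[Lj jM] [Fj nj]]].
  have ej : j = ((j - n) + n)%N by apply: nat1 nL Lj.
  have Sx : Sset F (j - n) x.
    split.
      by move: Fj; rewrite /= ej iterD iter_cancel addnK.
    move=> [i /= ij Fi]; apply: nj; exists (i + n)%N => /=; first by apply: nat2 ij.
    by rewrite iterD iter_cancel.
  case: (ltnP (j - n)%N L) => h; first by left; exists (j - n)%N.
  by right; exists (j - n)%N => //=; apply/andP; split => //; apply: nat3 jM.
apply: le_trans (lem mG (measurableU _ _ mU (mT _)) sub) _.
apply: le_trans (measureU2 m mU (mT _)) _.
apply: le_trans (leeD (Ubig_le F L mF) DU) _.
by rewrite -EFinD lee_fin -/f; lra.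
Qed.
End Dyn.

Theorem mainTheorem8 (d : measure_display) (X : measurableType d)
  (R : realType) (m : probability X R) (tau : X -> X) (eps : nat -> R) :
  standard_borel X R ->
  non_atomic m ->
  invertible_mp m tau ->
  ergodic m tau ->
  (forall n, (0 < n)%N -> 0 < eps n <= 1) ->
  (forall n, (0 < n)%N -> eps n.+1 <= eps n) ->
  eps @ \oo --> 0 ->
  exists B : nat -> set X,
    [/\ forall n, (0 < n)%N -> measurable (B n),
        forall n, (0 < n)%N -> B n.+1 `<=` B n,
        (fun n => m (B n)) @ \oo --> 0%E,
        forall n, (0 < n)%N -> ((eps n)%:E <= m (B n))%E &
        {ae m, forall x, finite_set [set n | (0 < n)%N /\ B n (iter n tau x)]}].
Proof.
move=> _ na [sigma [ts st mtau msig mp]] erg eps01 epsdec epscvg.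
pose e (k : nat) : R := 1 / (2 ^ (k + 1))%:R.
have e0 k : 0 < e k by rewrite /e mul1r invr_gt0 ltr0n expn_gt0.
have e1 k : e k <= 1.
  by rewrite /e mul1r invf_le1 ?ltr0n ?expn_gt0 // ler1n expn_gt0.
pose δ k := e k / 4.
have δ0 k : 0 < δ k by rewrite /δ divr_gt0.
have δ4 k : δ k <= 4^-1 by have := e1 k; have := e0 k; rewrite /δ; lra.
have hP k : exists P, forall n, (P <= n)%N -> eps n < δ k.
  by case: (cvgr_lt 0 epscvg (δ k) (δ0 k)) => P _ HP; exists P => n Pn; exact: HP.
case: (choice hP) => Pf HPf.
pose N k := (\sum_(i < k.+1) (Pf i).+1)%N.
have NS k : N k.+1 = (N k + (Pf k.+1).+1)%N by rewrite /N big_ord_recr.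
have NP k : (Pf k <= N k)%N.
  by rewrite /N big_ord_recr /=; apply: leq_trans (leqnSn _) (leq_addl _ _).
have Nlt k : (N k < N k.+1)%N by rewrite NS addnS ltnS leq_addr.
have Nle : {homo N : a b / (a <= b)%N}.
  exact: (homo_leq leqnn (fun y x z => @leq_trans y x z) (fun i => ltnW (Nlt i))).
have Ngt k : (k < N k)%N.
  elim: k => [|k IH]; first by rewrite /N big_ord_recr /= addnS.
  exact: leq_ltn_trans IH (Nlt k).
have hD k := @core d X R m tau sigma ts mtau msig mp erg na (N k.+1) (δ k) (δ0 k) (δ4 k).
case: (choice hD) => Df HDf.
pose G k := \bigcup_(n in `I_(N k.+1)) (iter n tau @^-1` Df k).
pose B n := (if (n < N 0)%N then setT else set0) `|`
            \bigcup_j (if (n < N j.+1)%N then Df j else set0).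
have mD k : measurable (Df k) by case: (HDf k).
have mG k : measurable (G k).
  by apply: bigcup_measurable => n _; apply: mpreT => //; exact: mD.
have mB n : measurable (B n).
  apply: measurableU; first by case: ifP.
  by apply: bigcupT_measurable => j; case: ifP => // _; exact: mD.
have Bcase n y : B n y -> (n < N 0)%N \/ exists2 j, (n < N j.+1)%N & Df j y.
  by case => [|[j _]]; case: ifPn => // h hy; [left|right; exists j].
have Bdec n : B n.+1 `<=` B n.
  move=> x /Bcase [h|[j h Dx]]; first by left; rewrite (ltnW h).
  by right; exists j => //; rewrite (ltnW h).
have Btail K n : (N K <= n)%N -> B n `<=` \bigcup_(j in ~` `I_K) Df j.
  move=> Kn x /Bcase [h|[j h Dx]].
    by exfalso; move: h; rewrite ltnNge (leq_trans (Nle _ _ (leq0n K)) Kn).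
  exists j => //= jK; have := leq_trans h (leq_trans (Nle _ _ jK) Kn).
  by rewrite ltnn.
have sumE : (\sum_(k <oo) (e k)%:E = 1%:E)%E.
  have h := @cvg_geometric_eseries_half R 1 0.
  rewrite expr0 divr1 in h; exact: (cvg_lim _ h).
have Dle k : (m (Df k) <= (e k)%:E)%E.
  case: (HDf k) => _ _ h _; apply: le_trans h _; rewrite lee_fin /δ.
  by have := e0 k; lra.
have Gle k : (m (G k) <= (e k)%:E)%E.
  case: (HDf k) => _ _ _ h; apply: le_trans h _; rewrite lee_fin /δ.
  by have := e0 k; lra.
have sumfin (E : nat -> set X) : (forall k, m (E k) <= (e k)%:E)%E ->
    (\sum_(k <oo) m (E k) < +oo)%E.
  move=> h; apply: le_lt_trans (_ : _ <= \sum_(k <oo) (e k)%:E)%E _.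
    by apply: lee_nneseries => k _ //; exact: h.
  by rewrite sumE ltry.
exists B; split.
- by move=> n _; exact: mB.
- by move=> n _; exact: Bdec.
- have Bnd : {homo (fun n => m (B n)) : a b / (a <= b)%N >-> (b <= a)%E}.
    apply: (homo_leq (r := fun a b => (b <= a)%E)) => //.
      by move=> y x z hxy hyz; exact: le_trans hyz hxy.
    by move=> i; exact: (le_measure m (mem_set (mB _)) (mem_set (mB _)) (Bdec i)).
  have hc := ereal_nonincreasing_cvgn Bnd.
  suff <- : ereal_inf (range (fun n => m (B n))) = 0%E by [].
  apply/eqP; rewrite eq_le; apply/andP; split; last first.
    by apply: le_ereal_inf_tmp => _ [n _ <-]; exact: measure_ge0.
  have tc := nneseries_tail_cvg (sumfin _ Dle) (fun k _ => measure_ge0 m (Df k)).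
  rewrite -(cvg_lim _ tc) //; apply: lime_ge; first by apply/cvg_ex; exists 0%E.
  apply: nearW => K.
  have h1 : (ereal_inf (range (fun n => m (B n))) <= m (B (N K)))%E.
    by apply: ereal_inf_lbound; exists (N K).
  apply: le_trans h1 _.
  exact: measure_sigma_subadditive_tail mD (mB _) (Btail K _ (leqnn _)).
- move=> n n0; case: (ltnP n (N 0)) => hn.
    rewrite (_ : B n = setT); last by apply/seteqP; split => x //= _; left; rewrite hn.
    by rewrite probability_setT lee_fin; case/andP: (eps01 n n0).
  have exj : exists j, (n < N j.+1)%N by exists n; exact: ltn_trans (Ngt n) (Nlt n).
  case: (ex_minnP exj) => j hj minj.
  have Nj : (N j <= n)%N.
    case: j hj minj => // i hj minj; rewrite leqNgt; apply/negP => h.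
    by have := minj _ h; rewrite ltnn.
  have epsd := ltW (HPf j n (leq_trans (NP j) Nj)).
  apply: le_trans (_ : _ <= (δ j)%:E)%E _; first by rewrite lee_fin.
  case: (HDf j) => _ hmD _ _; apply: le_trans hmD _.
  apply: (le_measure m (mem_set (mD j)) (mem_set (mB n))).
  by move=> x Dx; right; exists j => //; rewrite hj.
- exists (lim_sup_set G); split.
  + apply: bigcapT_measurable => K; apply: bigcup_measurable => j _; exact: mG.
  + exact: lim_sup_set_cvg0 mG (sumfin _ Gle).
  + move=> x /= hx K _.
    have : ~ ([set n | (0 < n)%N /\ B n (iter n tau x)] `<=` `I_(N K)).
      by move=> sub; apply: hx; exact: sub_finite_set sub (finite_II _).
    move=> /existsNP [n /not_implyP [[n0 Bn] nK]].
    have Kn : (N K <= n)%N by rewrite leqNgt; apply/negP.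
    case: (Bcase _ _ Bn) => [h|[j h Dx]].
      by exfalso; move: h; rewrite ltnNge (leq_trans (Nle _ _ (leq0n K)) Kn).
    exists j => /=.
      rewrite leqNgt; apply/negP => jK.
      by have := leq_trans h (leq_trans (Nle _ _ jK) Kn); rewrite ltnn.
    by exists n.
Qed.
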